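(* Let $n\ge3$. For an SSM-recurrent configuration $c$ on $W_n$ define $m(c)\in\{0,1,2\}^n$ by $m(c)_i=0$ if $c_i=0$, $m(c)_i=2$ if $i$ is a cyclically first maximal vertex of $c$, and $m(c)_i=1$ otherwise. Then $m$ is a surjection from the set of SSM-recurrent configurations on $W_n$ onto the set of minimal SSM-recurrent configurations on $W_n$, $m(c)=c$ whenever $c$ is minimal SSM-recurrent, and $\mathrm{level}(c)=|c|-|m(c)|$, where $|c|=\sum_{i=1}^n c_i$.
   Context: $W_n$: cycle $C_n$ on $[n]$ (edges $\{i,i+1\}$, $\{n,1\}$, indices mod $n$, vertices clockwise) plus sink $0$ adjacent to all of $[n]$. For $i,j\in[n]$, $(i,j)$ is the set of vertices strictly between $i$ and $j$ going clockwise from $i$ to $j$ ($(i,i)=[n]\setminus\{i\}$). Sandpile setting: stable configurations on $W_n$ are $c\in\{0,1,2\}^n$; SSM (parameter $p\in(0,1)$: a toppling vertex sends a grain independently to each neighbour with probability $p$, grains to the sink vanish) Markov chain adds a grain at a random vertex and stabilises; SSM-recurrent = recurrent state. Known: stable $c$ is SSM-recurrent iff for all $i,j$ with $c_i=c_j=0$ some $k\in(i,j)$ has $c_k=2$. Minimal SSM-recurrent: SSM-recurrent with no other SSM-recurrent $c'$ satisfying $c'_i\le c_i$ for all $i$. A vertex $i$ is a cyclically first maximal vertex of $c$ if $c_i=2$ and there is $j\in[n]$ with $c_j=0$ and $c_k=1$ for all $k\in(j,i)$. The level of a recurrent configuration on $W_n$ is $\mathrm{level}(c)=\sum_i c_i+\deg(0)-|E(W_n)|=\sum_i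 c_i-n$. *)

(* Defs.v *)
From mathcomp Require Import all_boot all_algebra.
Set Implicit Arguments. Unset Strict Implicit. Unset Printing Implicit Defensive.

(* Vertices of the cycle C_n are [n] = {1,..,n}, modelled by 'I_n = {0,..,n-1};
   clockwise successor of i is i+1 mod n. Configurations on the non-sink
   vertices of W_n are finite functions 'I_n -> nat. *)
Definition config (n : nat) := {ffun 'I_n -> nat}.

(* k lies in the open clockwise interval (i,j); (i,i) = [n] \ {i}. *)
Definition in_open (n : nat) (i j k : 'I_n) : bool :=
  let d := (k + n - i) %% n in
  let e := (j + n - i) %% n in
  (0 < d) && ((d < e) || (i == j)).

(* Stable configurations on W_n: every vertex of [n] has degree 3. *)
Definition stable (n : nat) (c : config n) : Prop := forall i, c i <= 2.

(* SSM-recurrent, via the known combinatorial characterisation. *)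
Definition ssm_recurrent (n : nat) (c : config n) : Prop :=
  stable c /\
  forall i j : 'I_n, c i = 0 -> c j = 0 -> exists k, in_open i j k /\ c k = 2.

Definition minimal_ssm_recurrent (n : nat) (c : config n) : Prop :=
  ssm_recurrent c /\
  forall c' : config n, ssm_recurrent c' -> (forall i, c' i <= c i) -> c' = c.

Definition cfm_vertex (n : nat) (c : config n) (i : 'I_n) : bool :=
  (c i == 2) &&
  [exists j : 'I_n, (c j == 0) && [forall k : 'I_n, in_open j i k ==> (c k == 1)]].

Definition mconf (n : nat) (c : config n) : config n :=
  [ffun i => if c i == 0 then 0 else if cfm_vertex c i then 2 else 1].

Definition csize (n : nat) (c : config n) : nat := \sum_(i < n) c i.

(* |E(W_n)| = n (cycle edges, n >= 3) + n (spokes); deg(0) = n. *)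
Definition level (n : nat) (c : config n) : int :=
  (csize c)%:Z + n%:Z - (2 * n)%:Z.

(* Main.v *)
Require Import Defs.
From mathcomp Require Import all_boot all_algebra.
From mathcomp Require Import zify.
Set Implicit Arguments. Unset Strict Implicit.

Definition off {n} (j k : 'I_n) := (k + n - j) %% n.

Lemma offE n (j k : 'I_n) : off j k = if j <= k then k - j else k + n - j.
Proof.
have := ltn_ord j; have := ltn_ord k; rewrite /off; case: (leqP j k) => h Hk Hj.
- have -> : k + n - j = (k - j) + n by lia.
  rewrite modnDr modn_small //; lia.
- rewrite modn_small //; lia.
Qed.

Lemma in_openE n (i j k : 'I_n) :
  in_open i j k = (0 < off i k) && ((off i k < off i j) || (i == j)).
Proof. by []. Qed.

Ltac offl := rewrite ?offE;
  repeat match goal with |- context [if ?b then _ else _] =>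
    let H := fresh "Hc" in case: ifP => H end.

Lemma off_pos n (j k : 'I_n) : (0 < off j k) = (k != j).
Proof.
have := ltn_ord j; have := ltn_ord k => Hk Hj.
apply/idP/idP.
- move=> H1; apply/eqP => E; move: H1; rewrite E; offl; lia.
- move=> /eqP H. have H' : nat_of_ord k <> j by move=> E; apply: H; apply: ord_inj.
  offl; lia.
Qed.

Lemma off_inj n (j k k' : 'I_n) : off j k = off j k' -> k = k'.
Proof.
have := ltn_ord j; have := ltn_ord k; have := ltn_ord k'.
move=> ? ? ? E; apply: ord_inj; move: E; offl; lia.
Qed.

Lemma off_injl n (j j' i : 'I_n) : off j i = off j' i -> j = j'.
Proof.
have := ltn_ord j; have := ltn_ord j'; have := ltn_ord i.
move=> ? ? ? E; apply: ord_inj; move: E; offl; lia.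
Qed.

Lemma cyc_between n (j j' i : 'I_n) :
  0 < off j i -> off j i < off j' i -> 0 < off j' j /\ off j' j < off j' i.
Proof.
have := ltn_ord j; have := ltn_ord j'; have := ltn_ord i.
move=> ? ? ? E0 E; move: E0 E; offl; lia.
Qed.

Section Main.
Variable n : nat.

Definition wit (c : config n) (j i : 'I_n) : bool :=
  (c j == 0) && [forall k : 'I_n, in_open j i k ==> (c k == 1)].

Lemma witP (c : config n) j i :
  reflect (c j = 0 /\ forall k, in_open j i k -> c k = 1) (wit c j i).
Proof.
apply: (iffP andP) => [[/eqP -> /forallP H]|[-> H]]; split => //.
- by move=> k /(implyP (H k)) /eqP.
- by apply/forallP => k; apply/implyP => /H ->.
Qed.

Lemma cfmP (c : config n) i :
  reflect (c i = 2 /\ exists j, c j = 0 /\ forall k, in_open j i k -> c k = 1)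
    (cfm_vertex c i).
Proof.
apply: (iffP andP) => [[/eqP -> /existsP [j /witP H]]|[-> [j H]]]; split => //.
- by exists j.
- by apply/existsP; exists j; apply/witP.
Qed.

Lemma U1 (c : config n) j i i' : c j = 0 -> c i = 2 -> c i' = 2 ->
  (forall k, in_open j i k -> c k = 1) -> (forall k, in_open j i' k -> c k = 1) ->
  i = i'.
Proof.
move=> cj ci ci' H H'.
have ij : i != j by apply/eqP => E; move: ci; rewrite E cj.
have i'j : i' != j by apply/eqP => E; move: ci'; rewrite E cj.
case: (ltngtP (off j i) (off j i')) => h.
- have : in_open j i' i by rewrite in_openE off_pos ij h.
  by move/H'; rewrite ci.
- have : in_open j i i' by rewrite in_openE off_pos i'j h.
  by move/H; rewrite ci'.
- exact: off_inj h.
Qed.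

Lemma U2 (c : config n) j j' i : c j = 0 -> c j' = 0 -> c i = 2 ->
  (forall k, in_open j i k -> c k = 1) -> (forall k, in_open j' i k -> c k = 1) ->
  j = j'.
Proof.
move=> cj cj' ci H H'.
have ij : i != j by apply/eqP => E; move: ci; rewrite E cj.
have ij' : i != j' by apply/eqP => E; move: ci; rewrite E cj'.
case: (ltngtP (off j i) (off j' i)) => h.
- have pos : 0 < off j i by rewrite off_pos.
  have [h1 h2] := cyc_between pos h.
  have : in_open j' i j by rewrite in_openE h1 h2.
  by move/H'; rewrite cj.
- have pos : 0 < off j' i by rewrite off_pos.
  have [h1 h2] := cyc_between pos h.
  have : in_open j i j' by rewrite in_openE h1 h2.
  by move/H; rewrite cj'.
- exact: off_injl h.
Qed.

Lemma Ex (c : config n) j : ssm_recurrent c -> c j = 0 ->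
  exists i, c i = 2 /\ forall k, in_open j i k -> c k = 1.
Proof.
move=> [st rec] cj.
have [k0 [hk0 ck0]] := rec j j cj cj.
pose P := fun k => (0 < off j k) && (c k != 1).
have P0 : P k0.
  by move: hk0; rewrite in_openE /P => /andP [-> _]; rewrite ck0.
case: (@arg_minnP _ k0 P (off j) P0) => i /andP [pi ci] imin.
have H : forall k, in_open j i k -> c k = 1.
  move=> k; rewrite in_openE => /andP [pk].
  have ji : (j == i) = false by apply/negbTE; rewrite eq_sym -off_pos.
  rewrite ji orbF => lt.
  apply/eqP; apply: contraTT lt => ck; rewrite -leqNgt; apply: imin.
  by rewrite /P pk.
exists i; split => //.
have := st i; case E: (c i) => [|[|[|m]]] //; last by move: ci; rewrite E.
have [k [hk ck]] := rec j i cj E.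
by rewrite H in ck.
Qed.

End Main.

Section Count.
Variable n : nat.

Lemma card_CZ (c : config n) : ssm_recurrent c ->
  #|[set i | cfm_vertex c i]| = #|[set i | c i == 0]|.
Proof.
move=> rc.
pose f i := odflt i [pick j | wit c j i].
have fP : forall i, cfm_vertex c i -> wit c (f i) i.
  move=> i /cfmP [_ [j hj]]; rewrite /f; case: pickP => [j' //|/(_ j)].
  by move/witP: hj => ->.
have -> : [set i | c i == 0] = f @: [set i | cfm_vertex c i].
  apply/setP => j; rewrite inE; apply/idP/imsetP.
  - move=> /eqP cj; have [i [ci H]] := Ex rc cj.
    have hi : cfm_vertex c i by apply/cfmP; split => //; exists j.
    exists i; first by rewrite inE.
    case/witP: (fP i hi) => cf Hf; exact: U2 cj cf ci H Hf.
  - by case=> i; rewrite inE => hi ->; case/witP: (fP i hi) => -> _.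
rewrite card_in_imset // => i i'; rewrite !inE => hi hi' e.
case/witP: (fP i hi) => c1 H1; case/witP: (fP i' hi') => c2 H2.
case/cfmP: hi => ci _; case/cfmP: hi' => ci' _.
rewrite -e in c2 H2; exact: U1 c1 ci ci' H1 H2.
Qed.

Lemma cardE' (A : {set 'I_n}) : #|A| = \sum_i (i \in A : nat).
Proof. by rewrite -sum1_card big_mkcond /=; apply: eq_bigr => i _; case: (i \in A). Qed.

Lemma sum_id (x : config n) : stable x ->
  csize x + #|[set i | x i == 0]| = n + #|[set i | x i == 2]|.
Proof.
move=> st; have E : n = \sum_(i < n) 1 by rewrite sum_nat_const card_ord muln1.
rewrite [X in _ = X + _]E /csize !cardE' -!big_split /=; apply: eq_bigr => i _; rewrite !inE.
by have := st i; case: (x i) => [|[|[|m]]].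
Qed.

Lemma csize_ge (c : config n) : ssm_recurrent c -> n <= csize c.
Proof.
move=> rc; have := sum_id rc.1; rewrite -card_CZ //.
have : #|[set i | cfm_vertex c i]| <= #|[set i | c i == 2]|.
  by apply: subset_leq_card; apply/subsetP => i; rewrite !inE => /andP [].
lia.
Qed.

Lemma mconf_rec (c : config n) : ssm_recurrent c -> ssm_recurrent (mconf c).
Proof.
move=> rc; split.
  by move=> i; rewrite ffunE; case: ifP => //; case: ifP.
have z : forall i, (mconf c i == 0) = (c i == 0).
  by move=> i; rewrite ffunE; case: ifP => // _; case: ifP.
move=> i j /eqP; rewrite z => /eqP ci /eqP; rewrite z => /eqP cj.
have [k [ck H]] := Ex rc ci.
have hk : cfm_vertex c k by apply/cfmP; split => //; exists i.
exists k; split; last by rewrite ffunE ck /= hk.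
have ki : k != i by apply/eqP => E; move: ck; rewrite E ci.
rewrite in_openE off_pos ki /=.
case: (eqVneq i j) => [->|ij]; first by rewrite orbT.
case: (ltngtP (off i k) (off i j)) => h //.
- have : in_open i k j by rewrite in_openE h andbT off_pos eq_sym ij.
  by move/H; rewrite cj.
- by have := off_inj h => E; move: ck; rewrite E cj.
Qed.

Lemma csize_m (c : config n) : ssm_recurrent c -> csize (mconf c) = n.
Proof.
move=> rc; have := sum_id (mconf_rec rc).1.
have -> : [set i | mconf c i == 0] = [set i | c i == 0].
  by apply/setP => i; rewrite !inE ffunE; case: ifP => // _; case: ifP.
have -> : [set i | mconf c i == 2] = [set i | cfm_vertex c i].
  apply/setP => i; rewrite !inE ffunE.
  case E: (c i == 0); case F: (cfm_vertex c i) => //.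
  by case/cfmP: F => c2; move/eqP: E; rewrite c2.
rewrite card_CZ //; lia.
Qed.

Lemma sum_eq (x y : config n) : (forall i, x i <= y i) -> csize y <= csize x -> x = y.
Proof.
move=> le hs; apply/ffunP => i; apply/eqP; rewrite eqn_leq le /=.
rewrite leqNgt; apply/negP => lt; move: hs; rewrite /csize (bigD1 i) //= [X in _ <= X](bigD1 i) //=.
have hsum : \sum_(j < n | j != i) x j <= \sum_(j < n | j != i) y j.
  by apply: leq_sum => j _; exact: le.
move=> h; have := leq_add lt hsum; rewrite addSn => h2.
by have := leq_trans h2 h; rewrite ltnn.
Qed.

End Count.

Unset Implicit Arguments.

Theorem mainTheorem5 (n : nat) (hn : 3 <= n) :
  (forall c : config n, ssm_recurrent c -> minimal_ssm_recurrent (mconf c)) /\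
  (forall d : config n, minimal_ssm_recurrent d ->
     exists c : config n, ssm_recurrent c /\ mconf c = d) /\
  (forall c : config n, minimal_ssm_recurrent c -> mconf c = c) /\
  (forall c : config n, ssm_recurrent c ->
     level c = ((csize c)%:Z - (csize (mconf c))%:Z)%R).
Proof.
have P1 : forall c : config n, ssm_recurrent c -> minimal_ssm_recurrent (mconf c).
  move=> c rc; split; first exact: mconf_rec.
  move=> c' rc' le; apply: sum_eq => //; rewrite csize_m //; exact: csize_ge.
have P3 : forall c : config n, minimal_ssm_recurrent c -> mconf c = c.
  move=> c [rc mn]; apply: mn; first exact: mconf_rec.
  move=> i; rewrite ffunE; case: ifP => [/eqP ->|] //; case: ifP => [/andP [/eqP -> _]|] //.
  by case: (c i).
split => //; split; first by move=> d md; exists d; split; [exact: md.1 | exact: P3].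
split => // c rc; rewrite /level csize_m //.
lia.
Qed.
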